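(* For every integer $k\ge2$, the polynomial $\widetilde{\Delta}_{3k,3}(C)$ has no roots in $\mathbb{Q}^{\mathrm{ab}}$, the maximal abelian extension of $\mathbb{Q}$.
   Context: Let $f_c(z)=z^2+c$, with iterates $f_c^{\circ 0}(z)=z$, $f_c^{\circ j}=f_c\circ f_c^{\circ(j-1)}$. For $n\ge1$ let $\Phi_n^*(z,c)=\prod_{j\mid n}(f_c^{\circ j}(z)-z)^{\mu(n/j)}$, and let $\delta_n(x,c)$ be the polynomial, monic in $x$, with $\delta_n(x,c)^n=\operatorname{Res}_z(\Phi_n^*(z,c),x-(f_c^{\circ n})'(z))$ (it lies in $\mathbb{Z}[x,4c]$ and is monic in $4c$). Let $\Psi_j$ be the $j$-th cyclotomic polynomial. For $m\mid n$, $m<n$, set $\Delta_{n,m}(c)=\operatorname{Res}_x(\Psi_{n/m}(x),\delta_m(x,c))$ and $\widetilde{\Delta}_{n,m}(C)=\Delta_{n,m}(C/4)\in\mathbb{Z}[C]$. Explicitly $\delta_3(x,C/4)=x^2-(2C+16)x+(C^3+8C^2+16C+64)$, so $\widetilde\Delta_{3k,3}(C)=\operatorname{Res}_x(\Psi_k(x),x^2-(2C+16)x+C^3+8C^2+16C+64)$. *)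

(* Defs.v *)
From HB Require Import structures.
From mathcomp Require Import all_boot all_order all_algebra all_fingroup all_solvable all_field.
Set Implicit Arguments. Unset Strict Implicit. Unset Printing Implicit Defensive.
Import GRing.Theory.
Local Open Scope ring_scope.

(* The variable C of Delta~ is the inner variable ('X : {poly int});
   the resultant variable x is the outer variable of {poly {poly int}}. *)
Definition Cvar : {poly int} := 'X.

(* delta_3(x, C/4) = x^2 - (2C+16) x + (C^3 + 8C^2 + 16C + 64), as a
   polynomial in x with coefficients in Z[C]. *)
Definition delta3C : {poly {poly int}} :=
  'X^2 - (2%:R * Cvar + 16%:R)%:P * 'X
  + (Cvar ^+ 3 + 8%:R * Cvar ^+ 2 + 16%:R * Cvar + 64%:R)%:P.

Definition Delta3k3 (k : nat) : {poly int} :=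
  resultant (map_poly polyC 'Phi_k) delta3C.

(* Main.v *)
Require Import Defs.
From HB Require Import structures.
From mathcomp Require Import all_boot all_order all_algebra all_fingroup all_solvable all_field.
Import GRing.Theory.
Local Open Scope ring_scope.
From mathcomp Require Import ring lra.
Import Order.TTheory Num.Theory.

Definition Gf (R : nzRingType) (s p : R) := p^+3 + p^+2 * s - 13 * p^+2 + 7 * p * s^+2 + 10 * p * s
   + 51 * p - s^+3 - s^+2 - 7 * s + 1.

Arguments Gf {R}.

Section An.
Variable R : realFieldType.
Implicit Types x Y s p : R.

Lemma anPos x Y : 0 <= Y -> 0 <= x -> 1 <= 4 * x^+2 + 2 * x ->
  (x^+3+x^+2+7*x-1 - (3*x+1)*Y)^+2 + Y*(3*x^+2+2*x+7 - Y)^+2 = 1 -> False.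
Proof.
move=> h0 h1 h2 h3.
have hx : 2/7 < x by nra.
have ha0 : 0 < (x^+3+x^+2+7*x-1)^+2 - 1 by nra.
have hd : 0 < 3*x^+4 + 4*x^+3 + 82*x^+2 + 132*x + 35 by nra.
have e : (x^+3+x^+2+7*x-1 - (3*x+1)*Y)^+2 + Y*(3*x^+2+2*x+7 - Y)^+2 - 1 =
  Y * ((Y + (3*x^+2+2*x-13)/2)^+2 + (3*x^+4 + 4*x^+3 + 82*x^+2 + 132*x + 35)/4)
  + ((x^+3+x^+2+7*x-1)^+2 - 1).
  by field.
have : 0 < Y * ((Y + (3*x^+2+2*x-13)/2)^+2 + (3*x^+4 + 4*x^+3 + 82*x^+2 + 132*x + 35)/4)
  + ((x^+3+x^+2+7*x-1)^+2 - 1).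
  apply: ltr_wpDl => //; apply: mulr_ge0 => //; apply: addr_ge0; first exact: sqr_ge0.
  by apply: divr_ge0 => //; apply: ltW.
by rewrite -e h3 subrr ltxx.
Qed.

Lemma anNeg x Y : 0 <= Y -> x <= 0 -> 1 <= 4 * x^+2 + 2 * x ->
  (x^+3+x^+2+7*x-1 - (3*x+1)*Y)^+2 + Y*(3*x^+2+2*x+7 - Y)^+2 = 1 -> False.
Proof.
move=> h0 h1 h2 h3.
have hx : x < -4/5 by nra.
set A := x^+3+x^+2+7*x-1 in h3. set D := 3*x^+2+2*x+7 in h3.
pose b := -(3*x+1). pose E := -(x^+3+x^+2+2*x+1).
have hb : 7/5 < b by rewrite /b; lra.
have hE : 2/5 < E.
  rewrite /E. nra.
have hU : (A + b*Y)^+2 <= 1.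
  have : (3*x+1) = -b by rewrite /b opprK.
  move=> eb; rewrite eb mulNr opprK in h3.
  have : 0 <= Y*(D - Y)^+2 by apply: mulr_ge0 => //; exact: sqr_ge0.
  lra.
have hA : A < -6 by rewrite /A; nra.
have hY1 : -A - 1 <= b * Y by nra.
have hY2 : b * Y <= -A + 1 by nra.
have hbD : b * D + A = 8 * E by rewrite /b /D /A /E; ring.
have hV : 8 * E - 1 <= b * (D - Y) by nra.
have key : b^+3 < (-A - 1) * (8*E - 1)^+2.
  pose y := - x.
  have hy : 4/5 < y by rewrite /y; lra.
  have e1 : b = 3*y - 1 by rewrite /b /y; ring.
  have e2 : -A - 1 = y^+3 - y^+2 + 7*y by rewrite /A /y; ring.
  have e3 : 8*E - 1 = 8*y*(y^+2 - y + 2) - 9 by rewrite /E /y; ring.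
  rewrite e1 e2 e3.
  have f1 : 6*y <= y^+3 - y^+2 + 7*y by nra.
  have f2 : 11/4*y <= 8*y*(y^+2 - y + 2) - 9 by nra.
  have f3 : 121/16*y^+2 <= (8*y*(y^+2 - y + 2) - 9)^+2.
    have : 0 <= 11/4*y by nra.
    move=> h; have := ler_pM h h f2 f2. rewrite -expr2. nra.
  have f4 : 6*y*(121/16*y^+2) <= (y^+3 - y^+2 + 7*y) * (8*y*(y^+2 - y + 2) - 9)^+2.
    apply: ler_pM => //; nra.
  have f5 : (3*y-1)^+3 < 27 * y^+3 by nra.
  nra.
have hYV : Y*(D-Y)^+2 <= 1.
  have : 0 <= (A - (3*x+1)*Y)^+2 by exact: sqr_ge0.
  lra.
have : (-A - 1) * (8*E - 1)^+2 <= b^+3 * (Y * (D-Y)^+2).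
  have -> : b^+3 * (Y * (D-Y)^+2) = (b * Y) * (b * (D - Y))^+2 by ring.
  apply: ler_pM; [nra | exact: sqr_ge0 | done |].
  apply: ler_pM; nra.
have hb3 : 0 < b^+3 by apply: exprn_gt0; lra.
have : b^+3 * (Y * (D-Y)^+2) <= b^+3.
  by rewrite -[X in _ <= X]mulr1 ler_pM2l.
lra.
Qed.

Lemma anA s p : s^+2 <= 4 * p -> Gf s p = 1 -> s^+2 + s < 1.
Proof.
move=> h1 h2; rewrite ltNge; apply/negP => h3.
pose x := s / 2; pose Y := p - s^+2 / 4.
have hY : 0 <= Y by rewrite /Y; lra.
have e : Gf s p = (x^+3+x^+2+7*x-1 - (3*x+1)*Y)^+2 + Y*(3*x^+2+2*x+7 - Y)^+2.
  by rewrite /Gf /x /Y; field.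
have hx : 1 <= 4 * x^+2 + 2 * x by rewrite /x; lra.
rewrite e in h2.
have [hx0|hx0] := lerP 0 x.
  exact: (@anPos x Y hY hx0 hx h2).
exact: (@anNeg x Y hY (ltW hx0) hx h2).
Qed.

Lemma anB p : 0 <= p -> Gf 0 p = 1 -> p = 0.
Proof.
move=> h1 h2.
have e : p * (p^+2 - 13 * p + 51) = Gf 0 p - 1 by rewrite /Gf; ring.
rewrite h2 subrr in e.
have h : 0 < p^+2 - 13 * p + 51.
  have e2 : p^+2 - 13 * p + 51 = (p - 13/2)^+2 + 35/4 by field.
  rewrite e2; have := sqr_ge0 (p - 13/2); lra.
by move/eqP: e; rewrite mulf_eq0 (gt_eqF h) orbF => /eqP.
Qed.

Lemma anC p : 1 <= 4 * p -> Gf (-1) p = 1 -> p != 7 -> 7 < p /\ p < 8.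
Proof.
move=> h1 h2 h3.
have e : (p - 7) * (p^+2 - 7 * p - 1) = Gf (-1) p - 1 by rewrite /Gf; ring.
rewrite h2 subrr in e.
move/eqP: e; rewrite mulf_eq0 subr_eq0 (negPf h3) /= => /eqP e.
split; nra.
Qed.
End An.




Lemma Gf_morph (R S : nzRingType) (f : {rmorphism R -> S}) (s p : R) :
  f (Gf s p) = Gf (f s) (f p).
Proof. by rewrite /Gf !(rmorphD, rmorphN, rmorphB, rmorphM, rmorphXn, rmorph_nat, rmorph1). Qed.

Lemma anA_C (s p : algC) : s \is Creal -> p \is Creal -> s^+2 <= 4 * p -> Gf s p = 1 ->
  `|s^+2 + s| < 1.
Proof.
move=> hs hp h1 h2.
pose sR := in_algR hs; pose pR := in_algR hp.
have h1' : sR^+2 <= 4 * pR.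
  by rewrite -[_ <= _]/(algRval _ <= algRval _) !(rmorphM, rmorphXn, rmorph_nat).
have h2' : Gf sR pR = 1 by apply: (@fmorph_inj _ _ algRval); rewrite Gf_morph rmorph1.
have h3 := @anA _ _ _ h1' h2'.
have h4 : `|sR^+2 + sR| < 1.
  rewrite ltr_norml h3 andbT; nra.
by move: h4; rewrite -[_ < _]/(algRval _ < algRval _) !(rmorphD, rmorphXn, rmorph1).
Qed.

Lemma anB_C (p : algC) : p \is Creal -> 0 ^+ 2 <= 4 * p -> Gf 0 p = 1 -> p = 0.
Proof.
move=> hp h1 h2; pose pR := in_algR hp.
have h1' : 0 <= pR.
  have : 0 ^+ 2 <= 4 * pR.
    by rewrite -[_ <= _]/(algRval _ <= algRval _) !(rmorphM, rmorphXn, rmorph_nat, rmorph0).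
  lra.
have h2' : Gf 0 pR = 1 by apply: (@fmorph_inj _ _ algRval); rewrite Gf_morph rmorph1 rmorph0.
by have := @anB _ _ h1' h2' => /(congr1 algRval); rewrite rmorph0.
Qed.

Lemma anC_C (p : algC) : p \is Creal -> (-1) ^+ 2 <= 4 * p -> Gf (-1) p = 1 -> p != 7 ->
  `|p - 7| < 1.
Proof.
move=> hp h1 h2 h3; pose pR := in_algR hp.
have h1' : 1 <= 4 * pR.
  have : (-1) ^+ 2 <= 4 * pR.
    by rewrite -[_ <= _]/(algRval _ <= algRval _) !(rmorphM, rmorphXn, rmorphN, rmorph_nat, rmorph1).
  lra.
have h2' : Gf (-1) pR = 1 by apply: (@fmorph_inj _ _ algRval); rewrite Gf_morph rmorph1 rmorphN rmorph1.
have h3' : pR != 7.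
  by apply: contra h3 => /eqP/(congr1 algRval); rewrite rmorph_nat /= => ->.
have [h4 h5] := @anC _ _ h1' h2' h3'.
have h6 : `|pR - 7| < 1 by rewrite ltr_norml; apply/andP; split; lra.
by move: h6; rewrite -[_ < _]/(algRval _ < algRval _) !(rmorphB, rmorph_nat, rmorph1).
Qed.


Lemma conj_aut (x r : algC) : root (minCpoly x) r ->
  exists nu : {rmorphism algC -> algC}, nu x = r.
Proof.
move=> rr.
have [rs Drs] := closed_field_poly_normal (minCpoly x).
rewrite (monicP (minCpoly_monic x)) scale1r in Drs.
have [Qs [QsC [s1 Ds1 gen]]] := num_field_exists rs.
have xin : x \in rs by rewrite -root_prod_XsubC -Drs root_minCpoly.
have rin : r \in rs by rewrite -root_prod_XsubC -Drs.
have [a _ Da] : exists2 a, a \in s1 & x = QsC a by apply/mapP; rewrite Ds1.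
have [b _ Db] : exists2 b, b \in s1 & r = QsC b by apply/mapP; rewrite Ds1.
have [p0 [Dp0 mon_p0] dv_p0] := minCpolyP x.
have mQ q : map_poly QsC (map_poly (in_alg Qs) q) = map_poly ratr q.
  rewrite -map_poly_comp; apply: eq_map_poly => c.
  by rewrite /= rmorphZ_num rmorph1 mulr1.
have [m Dm] : exists m, minPoly 1 a = map_poly (in_alg Qs) m.
  by apply/polyOver1P; exact: minPolyOver.
have rootm : root (map_poly ratr m) x.
  by rewrite -mQ -Dm Da fmorph_root root_minPoly.
have dvm : map_poly ratr p0 %| map_poly (@ratr algC) m.
  by rewrite dvdp_map -dv_p0.
have rootmr : root (map_poly ratr m) r.
  by apply: root_dvdp dvm _; rewrite -Dp0.
have rootmb : root (minPoly 1 a) b.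
  by rewrite Dm -(fmorph_root QsC) mQ -Db.
pose f := kHomExtend 1 \1%VF a b.
have homf : kHom 1 <<1; a>> f.
  by apply: kHomExtendP; rewrite ?kHom1 ?lfun1_poly.
pose P := \prod_(y <- s1) ('X - y%:P).
have DP : P = map_poly (in_alg Qs) p0.
  apply: (@map_poly_inj _ _ QsC); rewrite mQ -Dp0 Drs -Ds1 /P rmorph_prod big_map.
  apply: eq_bigr => y _. rewrite rmorphB /= map_polyX map_polyC /=. by [].
have Pover : P \is a polyOver 1%VS by rewrite DP alg_polyOver.
have splitP : splittingFieldFor <<1; a>> P fullv.
  exists s1; first by rewrite eqpxx.
  apply/eqP; rewrite eqEsubv subvf /= -gen.
  by apply: adjoin_seqSl; exact: sub1v.
have [g homg Dg] := kHom_extends (sub1v _) homf Pover splitP.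
have gb : g a = b.
  rewrite -Dg ?memv_adjoin //.
  by rewrite (kHomExtend_val (kHom1 1 1)) ?lfun1_poly.
pose phiM := GRing.isMonoidMorphism.Build _ _ (fun_of_lfun g) (kHom_monoid_morphism homg).
pose phi : {rmorphism Qs -> Qs} := HB.pack (fun_of_lfun g) phiM.
have [nu Dnu] := extend_algC_subfield_aut QsC phi.
by exists nu; rewrite Da -Dnu /= gb Db.
Qed.

Lemma norm_lt1_contra (x : algC) : x \in Aint -> x != 0 ->
  (forall nu : {rmorphism algC -> algC}, `|nu x| < 1) -> False.
Proof.
move=> Ax nz hnu.
have [rs Drs] := closed_field_poly_normal (minCpoly x).
rewrite (monicP (minCpoly_monic x)) scale1r in Drs.
have hr r : r \in rs -> `|r| < 1 /\ r != 0.
  move=> rin; have [nu <-] : exists nu : {rmorphism algC -> algC}, nu x = r.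
    by apply: conj_aut; rewrite Drs root_prod_XsubC.
  by rewrite hnu fmorph_eq0.
pose c0 := (minCpoly x)`_0.
have c0Z : c0 \is a Num.int by move: Ax; rewrite unfold_in => /polyOverP /(_ 0%N).
have Dc0 : c0 = \prod_(r <- rs) (- r).
  rewrite /c0 -horner_coef0 Drs horner_prod; apply: eq_bigr => r _.
  by rewrite hornerXsubC sub0r.
have c0nz : c0 != 0.
  rewrite Dc0 prodf_seq_eq0; apply/hasPn => r /hr [_ h].
  by rewrite oppr_eq0.
have := norm_intr_ge1 c0Z c0nz.
have xin : x \in rs by rewrite -root_prod_XsubC -Drs root_minCpoly.
rewrite Dc0 normr_prod.
case: rs Drs hr xin {Dc0} => // r1 rs' _ hr _.
rewrite big_cons normrN.
have [h1 _] := hr r1 (mem_head _ _).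
have h2 : \prod_(j <- rs') `|- j| <= 1.
  rewrite big_seq_cond; apply: prodr_ile1 => j /andP[jin _].
  rewrite normr_ge0 /= normrN; apply: ltW.
  by have [] := hr j; rewrite // inE jin orbT.
move=> hge.
have : `|r1| * \prod_(j <- rs') `|- j| <= `|r1|.
  by rewrite -[X in _ <= X]mulr1 ler_wpM2l ?normr_ge0.
move=> h3; have := le_lt_trans (le_trans hge h3) h1.
by rewrite ltxx.
Qed.


Lemma embed_exists (L : fieldExtType rat) : exists e : {rmorphism L -> algC}, True.
Proof.
have ch : [pchar L] =i pred0 := ftrans (pchar_lalg L) (pchar_num _).
have sep : separable 1 {:L}.
  by apply/separableP => y _; apply: pcharf0_separable.
pose g := separable_generator 1 {:L}.
have Dfull : {:L}%VS = <<1; g>>%VS :> {vspace L}.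
  exact: eq_adjoin_separable_generator sep (sub1v _).
have [m0 Dm0] : exists m0, minPoly 1 g = map_poly (in_alg L) m0.
  by apply/polyOver1P; exact: minPolyOver.
have [c rc] : exists c, root (map_poly (@ratr algC) m0) c.
  apply/closed_rootP; rewrite size_map_poly.
  have := size_minPoly 1 g; rewrite Dm0 size_map_poly => ->.
  by rewrite /adjoin_degree.
have ex v : exists p : {poly rat}, v == (map_poly (in_alg L) p).[g].
  have /Fadjoin1_polyP [p ->] : v \in <<1; g>>%VS by rewrite -Dfull memvf.
  by exists p.
pose pv v := xchoose (ex v).
have Dpv v : v = (map_poly (in_alg L) (pv v)).[g] by apply/eqP; exact: xchooseP (ex v).
pose eps v := (map_poly (@ratr algC) (pv v)).[c].
have key v p : v = (map_poly (in_alg L) p).[g] -> eps v = (map_poly ratr p).[c].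
  move=> Dv; apply/eqP; rewrite -subr_eq0.
  have -> : eps v - (map_poly ratr p).[c] = (map_poly (@ratr algC) (pv v - p)).[c].
    by rewrite raddfB /= hornerD hornerN.
  apply/eqP; apply/rootP; apply: root_dvdp rc.
  rewrite dvdp_map -(dvdp_map (in_alg L)) -Dm0.
  apply: minPoly_dvdp; first exact: alg_polyOver.
  by rewrite /root raddfB /= hornerD hornerN -Dpv -Dv subrr.
have eps_add : zmod_morphism eps.
  move=> v w; rewrite (key (v - w) (pv v - pv w)).
    by rewrite raddfB /= hornerD hornerN.
  by rewrite raddfB /= hornerD hornerN -!Dpv.
have eps_mul : monoid_morphism eps.
  split.
    by rewrite (key 1 1) ?rmorph1 ?hornerC.
  move=> v w; rewrite (key (v * w) (pv v * pv w)).
    by rewrite rmorphM hornerM.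
  by rewrite rmorphM hornerM -!Dpv.
pose epsA := GRing.isZmodMorphism.Build _ _ eps eps_add.
pose epsM := GRing.isMonoidMorphism.Build _ _ eps eps_mul.
pose e : {rmorphism L -> algC} := HB.pack eps epsA epsM.
by exists e.
Qed.


Lemma lrm_gal (L : splittingFieldType rat) (f : {lrmorphism L -> L}) :
  exists2 x : gal_of {:L}, x \in ('Gal({:L} / 1%AS))%g & forall y, f y = x y.
Proof.
pose h := linfun f.
have hh : kHom 1 {:L} h.
  apply/kHomP_tmp; split.
    by move=> _ /vlineP[c ->]; rewrite lfunE /= linearZ /= rmorph1.
  by move=> a b _ _; rewrite !lfunE /= rmorphM.
have ha : kAut 1 {:L} h by rewrite kAutfE.
have [x Gx Dx] := kAut_to_gal ha.
exists x => // y; by rewrite -Dx ?memvf // lfunE.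
Qed.

Lemma abel_conj (L : splittingFieldType rat) (habel : abelian 'Gal({:L} / 1%AS))
   (e : {rmorphism L -> algC}) (a : L) (nu : {rmorphism algC -> algC}) :
  nu (e a)^* = (nu (e a))^*.
Proof.
have [iota Di] := restrict_aut_to_normal_num_field e (@Num.conj algC).
have [mu Dm] := restrict_aut_to_normal_num_field e nu.
have [gi Gi Dgi] := @lrm_gal L iota.
have [gm Gm Dgm] := @lrm_gal L mu.
have cm : commute gi gm.
  by have /centP := subsetP habel gi Gi; apply.
rewrite -Di -Dm -Dm -Di Dgi Dgm Dgm Dgi.
by rewrite -!galM ?memvf // cm.
Qed.


Lemma delta3C_monic : delta3C \is monic.
Proof.
rewrite /delta3C monicE -addrA lead_coefDl ?lead_coefXn //.
rewrite size_polyXn -mulNr -polyCN.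
rewrite (leq_ltn_trans (size_add _ _)) // gtn_max.
apply/andP; split.
  by rewrite mulrC (leq_ltn_trans (size_mul_leq _ _)) // size_polyX size_polyC; case: (_ != 0).
by rewrite size_polyC; case: (_ != 0).
Qed.

Lemma map_quad (R S : comNzRingType) (f : {rmorphism R -> S}) (A B : R) :
  map_poly f ('X^2 - A%:P * 'X + B%:P) = 'X^2 - (f A)%:P * 'X + (f B)%:P.
Proof.
by rewrite rmorphD rmorphB rmorphXn rmorphM /= !map_polyX !map_polyC.
Qed.

Lemma rm_lin1 (R S : comNzRingType) (f : {rmorphism R -> S}) (X : R) (a b : nat) :
  f (a%:R * X + b%:R) = a%:R * f X + b%:R.
Proof. by rewrite rmorphD /= rmorphM /= !rmorph_nat. Qed.

Lemma rm_lin2 (R S : comNzRingType) (f : {rmorphism R -> S}) (X : R) (a b c : nat) :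
  f (X ^+ 3 + a%:R * X ^+ 2 + b%:R * X + c%:R) = f X ^+ 3 + a%:R * f X ^+ 2 + b%:R * f X + c%:R.
Proof. by rewrite !rmorphD /= !rmorphM /= !rmorph_nat; ring. Qed.

Lemma res_root (k : nat) (hk : (2 <= k)%N) (w : algC) :
  root (map_poly (fun c : int => c%:~R : algC) (Delta3k3 k)) w ->
  exists zeta : algC, [/\ zeta ^+ k = 1, zeta != 1 &
    zeta ^+ 2 - (2 * w + 16) * zeta + (w ^+ 3 + 8 * w ^+ 2 + 16 * w + 64) = 0].
Proof.
move=> rw.
have cfu : commr_rmorph (intr : int -> algC) w by move=> a; exact: mulrC.
pose h := horner_morph cfu.
have hP : map_poly h (map_poly polyC 'Phi_k) = map_poly intr 'Phi_k.
  rewrite -map_poly_comp; apply: eq_map_poly => c /=.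
  by rewrite horner_morphC.
have hD : map_poly h delta3C =
   'X^2 - (2 * w + 16)%:P * 'X + (w ^+ 3 + 8 * w ^+ 2 + 16 * w + 64)%:P.
  rewrite /delta3C map_quad /Cvar.
  have hX : (h : {rmorphism {poly int} -> algC}) 'X = w by exact: horner_morphX.
  by rewrite rm_lin1 rm_lin2 hX.
have lP : h (lead_coef (map_poly polyC 'Phi_k)) != 0.
  rewrite (lead_coef_map_inj (@polyC_inj _)); last by rewrite polyC0.
  by rewrite (monicP (Cyclotomic_monic k)) /h horner_morphC rmorph1 oner_neq0.
have lD : h (lead_coef delta3C) != 0.
  by rewrite (monicP delta3C_monic) /h rmorph1 oner_neq0.
have h0 : h (Delta3k3 k) = 0.
  by move/rootP: rw.
have hR : resultant (map_poly intr 'Phi_k)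
   ('X^2 - (2 * w + 16)%:P * 'X + (w ^+ 3 + 8 * w ^+ 2 + 16 * w + 64)%:P) = 0.
  rewrite -hP -hD; exact: etrans (esym (map_resultant lP lD)) h0.
have /eqP := hR; rewrite resultant_eq0 => hg.
have [zeta rz] : exists zeta, root (gcdp (map_poly intr 'Phi_k)
   ('X^2 - (2 * w + 16)%:P * 'X + (w ^+ 3 + 8 * w ^+ 2 + 16 * w + 64)%:P)) zeta.
  by apply/closed_rootP; rewrite gtn_eqF.
rewrite root_gcd in rz; case/andP: rz => r1 r2.
have k0 : (0 < k)%N by apply: leq_trans hk.
have [z0 pz0] := C_prim_root_exists k0.
rewrite (Cintr_Cyclotomic pz0) (root_cyclotomic pz0) in r1.
exists zeta; split.
- exact: prim_expr_order r1.
- apply/eqP => z1; have := eq_prim_root_expr r1 1 0.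
  rewrite z1 !expr1n eqxx => /esym/eqP.
  by rewrite !modn_small // ?(leq_trans _ hk).
- move/rootP: r2; rewrite !hornerE.
  by [].
Qed.

Set Implicit Arguments. Unset Strict Implicit.

Definition good (x : algC) := forall nu : {rmorphism algC -> algC}, nu x^* = (nu x)^*.

Lemma goodD x y : good x -> good y -> good (x + y).
Proof. by move=> gx gy nu; rewrite !rmorphD /= gx gy. Qed.
Lemma goodN x : good x -> good (- x).
Proof. by move=> gx nu; rewrite !rmorphN /= gx. Qed.
Lemma goodM x y : good x -> good y -> good (x * y).
Proof. by move=> gx gy nu; rewrite !rmorphM /= gx gy. Qed.
Lemma goodV x : good x -> good (x^-1).
Proof. by move=> gx nu; rewrite !fmorphV /= gx. Qed.
Lemma good_nat n : good n%:R.
Proof. by move=> nu; rewrite !rmorph_nat. Qed.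

Lemma unit_norm (x : algC) k : (0 < k)%N -> x ^+ k = 1 -> `|x| = 1.
Proof.
move=> k0 xk; apply/eqP; rewrite -(pexpr_eq1 k0) ?normr_ge0 //.
by rewrite -normrX xk normr1.
Qed.

Lemma unit_conj (x : algC) k : (0 < k)%N -> x ^+ k = 1 -> x^* = x^-1.
Proof.
by move=> k0 xk; rewrite invC_norm (unit_norm k0 xk) expr1n invr1 mul1r.
Qed.

Lemma good_unit (x : algC) k : (0 < k)%N -> x ^+ k = 1 -> good x.
Proof.
move=> k0 xk nu; rewrite (unit_conj k0 xk) fmorphV.
have nxk : (nu x) ^+ k = 1 by rewrite -rmorphXn xk rmorph1.
by rewrite (unit_conj k0 nxk).
Qed.

Lemma monicBC (R : nzRingType) (p : {poly R}) c :
  p \is monic -> (1 < size p)%N -> p - c%:P \is monic.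
Proof.
move=> mp sp; rewrite monicE lead_coefDl ?(monicP mp) //.
by rewrite size_polyN size_polyC; case: (c != 0) => //=; exact: ltnW.
Qed.

Definition Fc (v : algC) := v ^+ 3 + v ^+ 2 + 7 * v - 1.

Lemma vfacts (v xi : algC) k : (0 < k)%N -> xi ^+ k = 1 -> Fc v = - xi ->
  [/\ v + v^* \is Num.real, v * v^* \is Num.real, (v + v^*) ^+ 2 <= 4 * (v * v^*)
    & Gf (v + v^*) (v * v^*) = 1].
Proof.
move=> k0 xk Fv.
have es : v + v^* = 2 * 'Re v by rewrite ReE mulrC divfK // pnatr_eq0.
have ep : v * v^* = `|v| ^+ 2 by rewrite normCK.
split.
- by rewrite es rpredM ?rpred_nat ?Creal_Re.
- by rewrite ep rpredX ?normr_real.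
- rewrite es ep normC2_Re_Im -subr_ge0.
  have -> : 4 * ('Re v ^+ 2 + 'Im v ^+ 2) - (2 * 'Re v) ^+ 2 = 4 * 'Im v ^+ 2 by ring.
  by rewrite mulr_ge0 ?ler0n // real_exprn_even_ge0 ?Creal_Im.
- have Fv' : Fc v^* = - xi^*.
    by rewrite -rmorphN -Fv /Fc !(rmorphB, rmorphD, rmorphM, rmorphXn, rmorph_nat, rmorph1).
  have -> : Gf (v + v^*) (v * v^*) = Fc v * Fc v^* by rewrite /Gf /Fc; ring.
  by rewrite Fv Fv' mulrNN -normCK (unit_norm k0 xk) expr1n.
Qed.

Lemma morph_sq1 (nu : {rmorphism algC -> algC}) (x : algC) :
  nu (x * (x + 1)) = nu x ^+ 2 + nu x.
Proof. by rewrite rmorphM /= rmorphD /= rmorph1 mulrDr mulr1 expr2. Qed.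

Lemma s0_facts (v : algC) : v * v^* = 0 -> v = 0.
Proof. by move/eqP; rewrite mul_conjC_eq0 => /eqP. Qed.

Lemma s1_facts (v : algC) : v + v^* = -1 -> v * v^* = 7 -> Fc v = -1.
Proof.
move=> hs hp.
have -> : Fc v = v * (v * (v + v^* + 1) - (v * v^* - 7)) - 1 by rewrite /Fc; ring.
by rewrite hs hp; ring.
Qed.

Unset Implicit Arguments.

Theorem theorem4p3 (k : nat) (hk : (2 <= k)%N)
    (L : splittingFieldType rat)
    (habel : abelian 'Gal({:L} / 1%AS)) (z : L) :
  ~~ root (map_poly (fun c : int => c%:~R : L) (Delta3k3 k)) z.
Proof.
apply/negP => rz.
have [e _] := embed_exists L.
pose w := e z.
have rw : root (map_poly (fun c : int => c%:~R : algC) (Delta3k3 k)) w.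
  move: rz; rewrite -(fmorph_root e) -map_poly_comp.
  have -> : map_poly (e \o (fun c : int => c%:~R : L)) (Delta3k3 k)
      = map_poly (fun c : int => c%:~R : algC) (Delta3k3 k).
    by apply: eq_map_poly => c /=; rewrite rmorph_int.
  by [].
have [zeta [zk z1 eqz]] := res_root k hk w rw.
have k0 : (0 < k)%N by apply: leq_trans hk.
have gw : good w := fun nu => abel_conj L habel e z nu.
have gz : good zeta := good_unit k0 zk.
have w0 : w != 0.
  apply/eqP => w0; rewrite w0 in eqz.
  have : (zeta - 8) ^+ 2 = 0 by rewrite -eqz; ring.
  move/eqP; rewrite expf_eq0 /= subr_eq0 => /eqP z8.
  have := unit_norm k0 zk; rewrite z8 normr_nat => /eqP.
  by rewrite pnatr_eq1.
pose u := (zeta - w - 8) / w.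
have e1 : u * w = zeta - w - 8 by rewrite /u divfK.
have e2 : u ^+ 2 = - (w + 7).
  apply: (mulIf (expf_neq0 2 w0)); rewrite -exprMn e1.
  apply/eqP; rewrite -subr_eq0.
  have -> : (zeta - w - 8) ^+ 2 - - (w + 7) * w ^+ 2 =
     zeta ^+ 2 - (2 * w + 16) * zeta + (w ^+ 3 + 8 * w ^+ 2 + 16 * w + 64) by ring.
  by rewrite eqz.
have Fu : Fc u = - zeta.
  apply/eqP; rewrite -subr_eq0 opprK.
  have -> : Fc u + zeta = (u + 1) * (u ^+ 2 + (w + 7)) - (u * w - (zeta - w - 8))
    by rewrite /Fc; ring.
  by rewrite e2 e1 addNr subrr mulr0 subrr.
have gu : good u.
  apply: goodM; last exact: goodV.
  apply: goodD; last exact: goodN (good_nat 8).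
  exact: goodD gz (goodN gw).
clearbody u.
have Au : u \in Aint.
  pose C3 : {poly algC} := ('X + 1%:P) * ('X^2 + 7%:P) - 8%:P.
  pose Q := C3 ^+ k - ((-1) ^+ k)%:P.
  have C3u : C3.[u] = - zeta.
    rewrite /C3 hornerD hornerN hornerC hornerM !hornerD hornerX hornerXn !hornerC -Fu /Fc; ring.
  apply: (@root_monic_Aint Q).
  - by rewrite /root /Q hornerD hornerN hornerC horner_exp C3u (exprNn zeta) zk mulr1 subrr.
  - have C3m : C3 \is monic.
      by apply: monicBC; [rewrite monicMl ?monicXaddC // monicXnaddC |
        rewrite size_monicM ?monicXaddC ?monic_neq0 ?monicXnaddC // size_XaddC size_XnaddC].
    have sC3 : size C3 = 4.
      rewrite /C3 size_addl size_monicM ?monicXaddC ?monic_neq0 ?monicXnaddC //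
        ?size_XaddC ?size_XnaddC //.
      by rewrite size_polyN size_polyC; case: (_ != 0).
    apply: monicBC; first exact: monic_exp.
    have : (0 < (size C3).-1 * k)%N by rewrite sC3 muln_gt0 k0.
    by rewrite -size_exp; case: (size _) => [|[|n]].
  - suff : Q \is a polyOver Num.int_num_subdef by [].
    rewrite /Q /C3.
    apply: rpredB; last by rewrite polyOverC rpredX ?rpredN ?rpred1.
    apply: rpredX; apply: rpredB; last by rewrite polyOverC rpred_nat.
    apply: rpredM; apply: rpredD.
    + exact: polyOverX.
    + by rewrite polyOverC rpred1.
    + by rewrite rpredX ?polyOverX.
    + by rewrite polyOverC rpred_nat.
have Auc : u^* \in Aint by rewrite (Aint_aut (@Num.conj algC)).
have As : u + u^* \in Aint by rewrite rpredD.
have Ap : u * u^* \in Aint by rewrite rpredM.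
have nuF (nu : {rmorphism algC -> algC}) : Fc (nu u) = - nu zeta.
  by rewrite -rmorphN -Fu /Fc !(rmorphB, rmorphD, rmorphM, rmorphXn, rmorph_nat, rmorph1).
have nuz (nu : {rmorphism algC -> algC}) : (nu zeta) ^+ k = 1.
  by rewrite -rmorphXn zk rmorph1.
have nuz1 (nu : {rmorphism algC -> algC}) : nu zeta != 1 by rewrite fmorph_eq1.
have nus (nu : {rmorphism algC -> algC}) : nu (u + u^*) = nu u + (nu u)^*.
  by rewrite rmorphD gu.
have nup (nu : {rmorphism algC -> algC}) : nu (u * u^*) = nu u * (nu u)^*.
  by rewrite rmorphM gu.
have [sR pR sp Gsp] := vfacts k0 zk Fu.
have [b0 | bnz] := eqVneq ((u + u^*) * ((u + u^*) + 1)) 0.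
  move/eqP: b0; rewrite mulf_eq0 => /orP[/eqP s0 | s1].
    rewrite s0 in sp Gsp.
    have p0 := anB_C _ pR sp Gsp.
    have u0 := s0_facts p0.
    move: Fu; rewrite u0 /Fc => /eqP.
    have -> : 0 ^+ 3 + 0 ^+ 2 + 7 * 0 - 1 = - 1 :> algC by ring.
    by rewrite eqr_opp eq_sym (negPf z1).
  have s1' : u + u^* = -1 by apply/eqP; rewrite -subr_eq0 opprK.
  have pn7 (nu : {rmorphism algC -> algC}) : nu (u * u^*) != 7.
    apply/eqP => h7.
    have hs : nu u + (nu u)^* = -1 by rewrite -nus s1' rmorphN1.
    have := s1_facts hs; rewrite -nup h7 => /(_ erefl).
    rewrite nuF => /eqP; rewrite eqr_opp.
    by rewrite (negPf (nuz1 nu)).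
  apply: (@norm_lt1_contra (u * u^* - 7)).
  - by rewrite rpredB ?rpred_nat.
  - by rewrite subr_eq0 (pn7 idfun).
  move=> nu; rewrite rmorphB rmorph_nat nup.
  have [sR' pR' sp' Gsp'] := vfacts k0 (nuz nu) (nuF nu).
  have hs : nu u + (nu u)^* = -1 by rewrite -nus s1' rmorphN1.
  rewrite hs in sp' Gsp'.
  have := pn7 nu; rewrite nup => hp7.
  exact: anC_C _ pR' sp' Gsp' hp7.
apply: (@norm_lt1_contra ((u + u^*) * ((u + u^*) + 1))) => //.
  by rewrite rpredM ?rpredD ?rpred1.
move=> nu.
have [sR' pR' sp' Gsp'] := vfacts k0 (nuz nu) (nuF nu).
have := anA_C _ _ sR' pR' sp' Gsp'.
by rewrite morph_sq1 nus.
Qed.
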